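(* Let $\mathcal{M}^2$ be the set of all maskable observables on $\mathbb{C}^2$, i.e. Hermitian $2\times2$ matrices $\mathcal{O}$ for which there exists some quantum channel $\mathcal{E}$ with $\mathcal{E}^*(\mathcal{O})=\mathbb{I}$. Then there is no single quantum channel $\mathcal{E}$ on $2\times 2$ matrices such that $\mathcal{E}^*(\mathcal{O})=\mathbb{I}$ for all $\mathcal{O}\in\mathcal{M}^2$.
   Context: A quantum channel $\mathcal{E}$ is a linear completely positive trace-preserving map on $d\times d$ complex matrices, $\mathcal{E}(\rho)=\sum_i E_i\rho E_i^\dagger$ with $\sum_i E_i^\dagger E_i=\mathbb{I}$; its adjoint is $\mathcal{E}^*(X)=\sum_i E_i^\dagger X E_i$, so that $\operatorname{Tr}(\mathcal{E}(\rho)X)=\operatorname{Tr}(\rho\,\mathcal{E}^*(X))$. An observable is a Hermitian matrix. *)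

(* Defs.v *)
From HB Require Import structures.
From mathcomp Require Import all_boot all_order all_algebra.
From mathcomp Require Import reals.
From mathcomp Require Import complex.
Set Implicit Arguments. Unset Strict Implicit. Unset Printing Implicit Defensive.
Import Order.TTheory GRing.Theory Num.Theory.
Local Open Scope ring_scope.
Local Open Scope complex_scope.

Definition dagger (C : numClosedFieldType) (m n : nat) (A : 'M[C]_(m, n)) : 'M[C]_(n, m) :=
  (map_mx Num.conj A)^T.

(* a finite family of Kraus operators E_0..E_{k-1} on d x d matrices is a
   quantum channel iff  sum_i E_i^dagger E_i = I *)
Definition is_channel (C : numClosedFieldType) (d k : nat) (E : 'I_k -> 'M[C]_d) : Prop :=
  \sum_(i < k) (dagger (E i) *m E i) = 1%:M.

Definition adjoint_ch (C : numClosedFieldType) (d k : nat) (E : 'I_k -> 'M[C]_d)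
  (X : 'M[C]_d) : 'M[C]_d :=
  \sum_(i < k) (dagger (E i) *m X *m E i).

Definition hermitian (C : numClosedFieldType) (d : nat) (O : 'M[C]_d) : Prop :=
  dagger O = O.

Definition maskable (C : numClosedFieldType) (d : nat) (O : 'M[C]_d) : Prop :=
  hermitian O /\
  exists (k : nat) (E : 'I_k -> 'M[C]_d), is_channel E /\ adjoint_ch E O = 1%:M.

(* Main.v *)
Require Import Defs.
From HB Require Import structures.
From mathcomp Require Import all_boot all_order all_algebra.
From mathcomp Require Import reals.
From mathcomp Require Import complex.
Import Order.TTheory GRing.Theory Num.Theory.
Local Open Scope ring_scope.
Local Open Scope complex_scope.

Section S.
Variable C : numClosedFieldType.

Lemma dagger_delta (p j : 'I_2) : dagger (delta_mx p j : 'M[C]_2) = delta_mx j p.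
Proof.
apply/matrixP => a b; rewrite !mxE.
by case: (a == j); case: (b == p); rewrite /= ?conjC0 ?conjC1 // andbC.
Qed.

Lemma adj_rep (p : 'I_2) (X : 'M[C]_2) :
  adjoint_ch (fun j : 'I_2 => delta_mx p j) X = X p p *: 1%:M.
Proof.
rewrite /adjoint_ch; apply/matrixP => a b.
rewrite summxE !mxE.
under eq_bigr => j _ do rewrite dagger_delta.
rewrite !big_ord_recl !big_ord0 !mxE !big_ord_recl !big_ord0 !mxE !big_ord_recl !big_ord0 !mxE.
case: a => [[|[|?]] ?] //; case: b => [[|[|?]] ?] //; case: p => [[|[|?]] ?] //=;
  rewrite /= ?(mulr0,mul0r,mulr1,mul1r,addr0,add0r) //.

all: by congr (X _ _); apply: val_inj.
Qed.

Lemma adjD d k (E : 'I_k -> 'M[C]_d) A B :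
  adjoint_ch E (A + B) = adjoint_ch E A + adjoint_ch E B.
Proof. by rewrite /adjoint_ch -big_split; apply: eq_bigr => i _; rewrite mulmxDr mulmxDl. Qed.

Lemma adj1 d k (E : 'I_k -> 'M[C]_d) : is_channel E -> adjoint_ch E 1%:M = 1%:M.
Proof. rewrite /is_channel /adjoint_ch => h; rewrite -[RHS]h; by apply: eq_bigr => i _; rewrite mulmx1. Qed.

Lemma mask_delta (p : 'I_2) : maskable (delta_mx p p : 'M[C]_2).
Proof.
split; first exact: dagger_delta.
exists 2, (fun j => delta_mx p j); split.
  have := adj_rep p 1%:M; rewrite mxE eqxx scale1r /adjoint_ch /is_channel => <-.
  apply: eq_bigr => j _; by rewrite mulmx1.
by rewrite adj_rep mxE !eqxx scale1r.
Qed.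
End S.

Theorem theorem2 (R : realType) :
  ~ exists (k : nat) (E : 'I_k -> 'M[R[i]]_2),
      is_channel E /\
      forall O : 'M[R[i]]_2, maskable O -> adjoint_ch E O = 1%:M.
Proof.
case=> k [E [hE H]].
have e : (delta_mx 0 0 + delta_mx 1 1 : 'M[R[i]]_2) = 1%:M.
  apply/matrixP => a b; rewrite !mxE.
  case: a => [[|[|a]] Ha] //; case: b => [[|[|b]] Hb] //=; rewrite ?addr0 ?add0r //.
have := @adj1 _ _ _ E hE; have m0 := @mask_delta (R[i]) 0; have m1 := @mask_delta (R[i]) 1.
rewrite -e adjD !H //.
move/(congr1 (fun M : 'M[R[i]]_2 => M 0 0)); rewrite !mxE /=.
move/eqP; rewrite addr0 -subr_eq0 addrK oner_eq0 //.
Qed.
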